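(* The cost-LPR calculus and the cost-BC calculus are incomplete: there is a MaxSAT instance $\Gamma$ encoded with blocking variables with $\mathrm{cost}(\Gamma)=1$ such that no derivation from $\Gamma$ in the cost-LPR calculus (and no derivation in the cost-BC calculus) contains a unit clause $b$ for a blocking variable $b$; in particular neither calculus proves $\mathrm{cost}(\Gamma)\ge 1$.
   Context: Literals, clauses, CNFs (multisets of clauses), $\mathrm{Var}(\Gamma)$. A substitution $\sigma$ maps variables to $0$, $1$ or literals, extended by $\sigma(\lnot x)=\lnot\sigma(x)$; $(\sigma\circ\tau)(x)=\sigma(\tau(x))$. A (partial) assignment has $\sigma(x)\in\{0,1,x\}$; its domain is $\sigma^{-1}(\{0,1\})$; total means all variables assigned. $C{\upharpoonright}_\sigma$: apply $\sigma$ to literals and simplify; $\Gamma{\upharpoonright}_\sigma$ is the multiset of $C{\upharpoonright}_\sigma\ne1$, $C\in\Gamma$. $\lnot C$ is the partial assignment falsifying all literals of $C$. $\Gamma\vdash_1 C$ means unit propagation on $\Gamma{\upharpoonright}_{\lnot C}$ derives the empty clause; $\Gamma\vdash_1\Delta$ means this holds for all $D\in\Delta$. A MaxSAT instance encoded with blocking variables is a CNF $\Gamma=H\cup\{C_1\lor b_1,\dots,C_m\lor b_m\}$ with distinct fresh blocking variables $b_i$; $\mathrm{cost}(\alpha)=\sum_i\alpha(b_i)$ for total $\alpha$; $\mathrm{cost}(\Gamma)=\min\{\mathrm{cost}(\alpha):\alpha\models\Gamma\}$. $C$ is cost-LPR w.r.t. $\Gamma$ if there is a partial assignment $\sigma$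 with the same domain as $\lnot C$, differing from $\lnot C$ on exactly one variable, such that (1) $\Gamma{\upharpoonright}_{\lnot C}\vdash_1(\Gamma\cup\{C\}){\upharpoonright}_\sigma$ and (2) $\mathrm{cost}(\tau\circ\sigma)\le\mathrm{cost}(\tau)$ for all total $\tau\supseteq\lnot C$. A clause $C\lor\ell$ is cost-BC w.r.t. $\Gamma$ and the literal $\ell$ if for every clause $D\lor\lnot\ell\in\Gamma$, $C\lor D$ is a tautology, and $\ell$ is not a blocking variable with positive polarity. A derivation in the cost-LPR (resp. cost-BC) calculus from $\Gamma$ is a sequence $D_1,\dots,D_t$ where each $D_i$ is in $\Gamma$, or follows from earlier clauses by weakening (from $A$ infer $B\supseteq A$) or resolution (from $A\lor x$, $B\lor\lnot x$ infer $A\lor B$), or is cost-LPR (resp. cost-BC) w.r.t. $\Gamma\cup\{D_1,\dots,D_{i-1}\}$ with $\mathrm{Var}(D_i)\subseteq\mathrm{Var}(\Gamma)$. *)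

(* Defs.v *)
From mathcomp Require Import all_boot.
Set Implicit Arguments. Unset Strict Implicit. Unset Printing Implicit Defensive.

(* Variables are natural numbers; a literal is (variable, polarity):
   (x, true) is x, (x, false) is ~x. *)
Definition lit := (nat * bool)%type.
Definition neg (l : lit) : lit := (l.1, ~~ l.2).
(* A clause is a seq of literals, read as the set of its literals;
   a CNF is a seq (multiset) of clauses. *)
Definition clause := seq lit.
Definition cnf := seq clause.

(* Partial assignment: None = unassigned (sigma x = x), Some b = constant b. *)
Definition passign := nat -> option bool.
Definition tassign := nat -> bool.

Definition lit_val (s : passign) (l : lit) : option bool :=
  match s l.1 with Some v => Some (v == l.2) | None => None end.

(* C|_s : None encodes the satisfied clause 1; otherwise the remaining
   (unassigned) literals, duplicates removed. *)
Definition restrict_clause (s : passign) (C : clause) : option clause :=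
  if has (fun l => lit_val s l == Some true) C then None
  else Some (undup [seq l <- C | lit_val s l == None]).

Definition restrict (s : passign) (G : cnf) : cnf := pmap (restrict_clause s) G.

Definition negC (C : clause) : passign :=
  fun x => if (x, true) \in C then Some false
           else if (x, false) \in C then Some true else None.

Definition unit_pa (l : lit) : passign :=
  fun x => if x == l.1 then Some l.2 else None.

Inductive up_refutes : cnf -> Prop :=
| up_empty F : [::] \in F -> up_refutes F
| up_unit F l : [:: l] \in F -> up_refutes (restrict (unit_pa l) F) -> up_refutes F.

Definition entails1 (F : cnf) (C : clause) : Prop :=
  up_refutes (restrict (negC C) F).

Definition sat_clause (a : tassign) (C : clause) : bool := has (fun l => a l.1 == l.2) C.
Definition sat (a : tassign) (G : cnf) : bool := all (sat_clause a) G.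
Definition cost (bs : seq nat) (a : tassign) : nat := \sum_(b <- bs) a b.

Definition has_cost (G : cnf) (bs : seq nat) (k : nat) : Prop :=
  (exists a, sat a G /\ cost bs a = k) /\ (forall a, sat a G -> k <= cost bs a).

Definition comp (t : tassign) (s : passign) : tassign :=
  fun x => match s x with Some b => b | None => t x end.

Definition extends (t : tassign) (s : passign) : Prop :=
  forall x v, s x = Some v -> t x = v.

Definition cost_LPR (bs : seq nat) (G : cnf) (C : clause) : Prop :=
  exists s : passign,
    (exists x, (exists v, negC C x = Some v /\ s x = Some (~~ v)) /\
               forall y, y <> x -> s y = negC C y) /\
    (forall D, D \in restrict s (rcons G C) -> entails1 (restrict (negC C) G) D) /\
    (forall t, extends t (negC C) -> cost bs (comp t s) <= cost bs t).

Definition tautology (C : clause) : Prop := exists l, l \in C /\ neg l \in C.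

Definition cost_BC (bs : seq nat) (G : cnf) (E : clause) : Prop :=
  exists l, l \in E /\
    (forall F, F \in G -> neg l \in F ->
       tautology ([seq k <- E | k != l] ++ [seq k <- F | k != neg l])) /\
    ~~ (l.2 && (l.1 \in bs)).

Definition cnf_vars (G : cnf) : seq nat := flatten [seq map fst C | C <- G].

Definition step (rule : cnf -> clause -> Prop) (G : cnf) (prev : cnf) (D : clause) : Prop :=
  D \in G
  \/ (exists A, A \in prev /\ {subset A <= D})
  \/ (exists A B x, A \in prev /\ B \in prev /\ (x, true) \in A /\ (x, false) \in B /\
        D =i [seq k <- A | k != (x, true)] ++ [seq k <- B | k != (x, false)])
  \/ (rule (G ++ prev) D /\ {subset map fst D <= cnf_vars G}).

Definition derivation (rule : cnf -> clause -> Prop) (G : cnf) (Ds : seq clause) : Prop :=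
  forall i, i < size Ds -> step rule G (take i Ds) (nth [::] Ds i).

Definition instance (H : cnf) (soft : seq (clause * nat)) : cnf :=
  H ++ [seq rcons p.1 (p.2, true) | p <- soft].
Definition blocking (soft : seq (clause * nat)) : seq nat := map snd soft.
Definition wf_instance (H : cnf) (soft : seq (clause * nat)) : Prop :=
  uniq (blocking soft) /\
  forall b, b \in blocking soft ->
    b \notin cnf_vars H /\ b \notin cnf_vars (map fst soft).

(* Main.v *)
Require Import Defs.
From mathcomp Require Import all_boot.
From mathcomp Require Import zify.
Set Implicit Arguments. Unset Strict Implicit.

Definition Inv (bs : seq nat) (F : cnf) : Prop :=
  forall b, b \in bs -> exists a, sat a F /\ a b = false.

Lemma sat_rcons a F D : sat a (rcons F D) = sat a F && sat_clause a D.
Proof. by rewrite /sat all_rcons andbC. Qed.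

Lemma sat_mem a F D : sat a F -> D \in F -> sat_clause a D.
Proof. by move=> /allP H /H. Qed.

Lemma cost_bump bs (t t' : tassign) x :
  (forall y, y != x -> t' y = t y) -> t x = false -> t' x = true ->
  cost bs t' = cost bs t + count_mem x bs.
Proof.
move=> Ht Hx Hx'; elim: bs => [|y bs IH]; rewrite /cost ?big_nil ?big_cons //=.
rewrite /cost in IH; rewrite IH.
case: (eqVneq y x) => [->|ne]; first by rewrite Hx Hx' /=; lia.
by rewrite Ht //=; lia.
Qed.

Lemma sat_restrict_clause a s C C' :
  extends a s -> restrict_clause s C = Some C' -> sat_clause a C -> sat_clause a C'.
Proof.
move=> Ha; rewrite /restrict_clause; case: ifP => // Hn [<-] /hasP [l lC al].
apply/hasP; exists l => //; rewrite mem_undup mem_filter lC andbT.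
move: Hn; rewrite /lit_val; case E: (s l.1) => [w|] //.
move: (Ha _ _ E) => Hw; move/negbT/hasPn/(_ l lC).
by rewrite /lit_val E -Hw al.
Qed.

Lemma sat_restrict a s F : extends a s -> sat a F -> sat a (restrict s F).
Proof.
move=> Ha; elim: F => [|C F IH] //=.
rewrite /restrict /=; case E: (restrict_clause s C) => [C'|] /andP [HC HF].
  by rewrite /= (sat_restrict_clause Ha E HC) IH.
exact: IH.
Qed.

Lemma up_sound F : up_refutes F -> forall a, sat a F -> False.
Proof.
elim=> [G HG|G l Hl _ IH] a Ha.
  by move: (sat_mem Ha HG).
apply: (IH a); apply: sat_restrict => //.
move: (sat_mem Ha Hl); rewrite /sat_clause /= orbF => /eqP Hal.
by move=> x v; rewrite /unit_pa; case: eqP => // -> [<-].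
Qed.

Lemma extends_negC a C : ~~ sat_clause a C -> extends a (negC C).
Proof.
move=> /hasPn H x v; rewrite /negC.
case: ifP => [Ht [<-]|_]; first by move: (H _ Ht) => /=; case: (a x).
case: ifP => [Hf [<-]|_ //]; by move: (H _ Hf) => /=; case: (a x).
Qed.

Lemma entails_sound a F D : sat a F -> entails1 F D -> sat_clause a D.
Proof.
move=> Ha; rewrite /entails1 => He; case Hs: (sat_clause a D) => //.
exfalso; apply: (up_sound (a:=a) He); apply: sat_restrict => //.
by apply: extends_negC; rewrite Hs.
Qed.

Lemma comp_None (a : tassign) (s : passign) E : restrict_clause s E = None -> sat_clause (Defs.comp a s) E.
Proof.
rewrite /restrict_clause; case: ifP => // /hasP [l lE]; rewrite /lit_val => Hl _.
apply/hasP; exists l => //; move: Hl; rewrite /Defs.comp.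
by case E1: (s l.1) => [w|] //= /eqP [] ->.
Qed.

Lemma comp_Some (a : tassign) (s : passign) E E' : restrict_clause s E = Some E' -> sat_clause a E' ->
  sat_clause (Defs.comp a s) E.
Proof.
rewrite /restrict_clause; case: ifP => // _ [<-] /hasP [l].
rewrite mem_undup mem_filter => /andP [Hl lE] al.
apply/hasP; exists l => //; move: Hl; rewrite /lit_val /Defs.comp.
by case: (s l.1).
Qed.

Lemma LPR_pres bs F C a b : b \in bs -> sat a F -> a b = false ->
  cost_LPR bs F C -> exists a', sat a' (rcons F C) /\ a' b = false.
Proof.
move=> bin Ha ab [s [[x [[v [Hv Hs]] Hoth]] [Hent Hcost]]].
case HC: (sat_clause a C); first by exists a; rewrite sat_rcons Ha HC.
have Ext : extends a (negC C) by apply: extends_negC; rewrite HC.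
have Hrest : sat a (restrict (negC C) F) by apply: sat_restrict.
have compE : forall y, y != x -> Defs.comp a s y = a y.
  move=> y ne; rewrite /Defs.comp Hoth; last by move=> E; rewrite E eqxx in ne.
  by case E: (negC C y) => [w|] //; rewrite (Ext _ _ E).
exists (Defs.comp a s); split.
  apply/allP => E HE; case E1: (restrict_clause s E) => [E'|]; last exact: comp_None.
  apply: (comp_Some E1); apply: (entails_sound Hrest); apply: Hent.
  by rewrite /restrict mem_pmap; apply/mapP; exists E.
case: (eqVneq x b) => [xb|ne]; last by rewrite compE 1?eq_sym.
exfalso; subst x.
have av : a b = v by apply: Ext.
have := Hcost a Ext; rewrite (@cost_bump bs a (Defs.comp a s) b) //.
  have : 0 < count_mem b bs by rewrite -has_count has_pred1.
  lia.
by rewrite /Defs.comp Hs -av ab.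
Qed.

Lemma lit_cases (m l : lit) : m.1 = l.1 -> m = l \/ m = neg l.
Proof.
move: m l => [m1 m2] [l1 l2] /= e; subst m1; rewrite /neg /=.
by case: m2; case: l2; auto.
Qed.

Lemma BC_pres bs F E a b : b \in bs -> sat a F -> a b = false ->
  cost_BC bs F E -> exists a', sat a' (rcons F E) /\ a' b = false.
Proof.
move=> bin Ha ab [l [lE [Hbl Hnb]]].
case HC: (sat_clause a E); first by exists a; rewrite sat_rcons Ha HC.
move/negbT/hasPn: HC => HC.
pose a' := fun y => if y == l.1 then l.2 else a y.
have a'l : a' l.1 = l.2 by rewrite /a' eqxx.
have a'o : forall y, y != l.1 -> a' y = a y by move=> y /negbTE; rewrite /a' => ->.
exists a'; split; last first.
  rewrite /a'; case: eqP => [eb|_]; last exact: ab.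
  by move: Hnb; rewrite -eb bin andbT => /negbTE.
rewrite sat_rcons; apply/andP; split; last first.
  by apply/hasP; exists l => //; rewrite a'l.
apply/allP => G HG; have aG := sat_mem Ha HG.
case lG: (l \in G); first by apply/hasP; exists l => //; rewrite a'l.
have good : forall m, m \in G -> a m.1 == m.2 -> m.1 != l.1 -> sat_clause a' G.
  by move=> m mG am ml; apply/hasP; exists m => //; rewrite a'o.
case nG: (neg l \in G).
  move: (Hbl G HG nG) => [k [Hk Hnk]].
  have kl : k.1 != l.1.
    apply/negP => /eqP /lit_cases [ek|ek].
      by move: Hk; rewrite ek mem_cat !mem_filter eqxx /= lG andbF.
    move: Hnk; rewrite ek /neg /= negbK -/(neg l) mem_cat !mem_filter.
    have -> : ((l.1, l.2) = l) by case: (l).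
    by rewrite eqxx /= lG andbF.
  have inU : forall m, m \in [seq k <- E | k != l] ++ [seq k <- G | k != neg l] ->
      m.1 != l.1 -> a m.1 == m.2 -> sat_clause a' G.
    move=> m; rewrite mem_cat !mem_filter => /orP [/andP [_ mE]|/andP [_ mG]] ml am.
      by move: (HC m mE); rewrite am.
    exact: good m mG am ml.
  case ak: (a k.1 == k.2); first exact: inU k Hk kl ak.
  apply: inU (neg k) Hnk kl _; rewrite /neg /=.
  by move: ak; case: (a k.1); case: (k.2).
case/hasP: aG => m mG am.
case: (eqVneq m.1 l.1) => [/lit_cases [em|em]|ml].
- by rewrite em lG in mG.
- by rewrite em nG in mG.
exact: good m mG am ml.
Qed.

Lemma step_pres (rule : cnf -> clause -> Prop) bs G prev D :
  (forall F C a b, b \in bs -> sat a F -> a b = false -> rule F C ->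
     exists a', sat a' (rcons F C) /\ a' b = false) ->
  Inv bs (G ++ prev) -> step rule G prev D -> Inv bs (rcons (G ++ prev) D).
Proof.
move=> Hr HI Hs b bin; have [a [Ha ab]] := HI b bin.
have keep : sat_clause a D -> exists a', sat a' (rcons (G ++ prev) D) /\ a' b = false.
  by move=> HD; exists a; rewrite sat_rcons Ha HD.
case: Hs => [DG|[[A [Ap sub]]|[[A [B [x [Ap [Bp [xA [xB HD]]]]]]]|[Hrule _]]]].
- by apply: keep; apply: (sat_mem Ha); rewrite mem_cat DG.
- apply: keep; have := sat_mem Ha (_ : A \in G ++ prev); rewrite mem_cat Ap orbT.
  by move=> /(_ isT) /hasP [k kA ak]; apply/hasP; exists k => //; apply: sub.
- apply: keep.
  have := sat_mem Ha (_ : A \in G ++ prev); rewrite mem_cat Ap orbT => /(_ isT) sA.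
  have := sat_mem Ha (_ : B \in G ++ prev); rewrite mem_cat Bp orbT => /(_ isT) sB.
  case ax: (a x).
    case/hasP: sB => k kB ak; apply/hasP; exists k => //.
    rewrite HD mem_cat !mem_filter kB andbT; apply/orP; right.
    by apply/negP => /eqP ek; move: ak; rewrite ek /= ax.
  case/hasP: sA => k kA ak; apply/hasP; exists k => //.
  rewrite HD mem_cat !mem_filter kA andbT; apply/orP; left.
  by apply/negP => /eqP ek; move: ak; rewrite ek /= ax.
- exact: Hr bin Ha ab Hrule.
Qed.

Lemma deriv_inv (rule : cnf -> clause -> Prop) bs G Ds :
  (forall F C a b, b \in bs -> sat a F -> a b = false -> rule F C ->
     exists a', sat a' (rcons F C) /\ a' b = false) ->
  Inv bs G -> derivation rule G Ds ->
  forall D b, D \in Ds -> b \in bs -> ~ (D =i [:: (b, true)]).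
Proof.
move=> Hr HG Hd.
have inv : forall i, i <= size Ds -> Inv bs (G ++ take i Ds).
  elim=> [|i IH] Hi; first by rewrite take0 cats0.
  rewrite (take_nth [::]) // -rcons_cat.
  by apply: step_pres (Hd i Hi); [exact: Hr | apply: IH; apply: ltnW].
move=> D b DD bin HD.
have [a [Ha ab]] := inv (size Ds) (leqnn _) b bin.
rewrite take_size in Ha.
have := sat_mem Ha (_ : D \in G ++ Ds); rewrite mem_cat DD orbT => /(_ isT).
case/hasP => k; rewrite HD inE => /eqP -> /=; by rewrite ab.
Qed.

Theorem corollary5p2 :
  exists (H : cnf) (soft : seq (clause * nat)),
    wf_instance H soft /\
    has_cost (instance H soft) (blocking soft) 1 /\
    (forall Ds, derivation (cost_LPR (blocking soft)) (instance H soft) Ds ->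
       forall D b, D \in Ds -> b \in blocking soft -> ~ (D =i [:: (b, true)])) /\
    (forall Ds, derivation (cost_BC (blocking soft)) (instance H soft) Ds ->
       forall D b, D \in Ds -> b \in blocking soft -> ~ (D =i [:: (b, true)])).
Proof.
exists [::], [:: ([:: (0, true)], 1); ([:: (0, false)], 2)].
have HI : Inv [:: 1; 2] (instance [::] [:: ([:: (0, true)], 1); ([:: (0, false)], 2)]).
  move=> b; rewrite !inE => /orP [] /eqP ->.
  - by exists (fun y => (y == 0) || (y == 2)).
  - by exists (fun y => y == 1).
split; [|split; [|split]].
- split => //= b; rewrite !inE => /orP [] /eqP -> //.
- split; first by exists (fun y => y == 1); rewrite /cost !big_cons big_nil.
  move=> a; rewrite /sat /cost /= !big_cons big_nil.
  by case: (a 0); case: (a 1); case: (a 2).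
- by move=> Ds Hd; apply: (deriv_inv _ HI Hd); exact: LPR_pres.
- by move=> Ds Hd; apply: (deriv_inv _ HI Hd); exact: BC_pres.
Qed.
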